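(* Let $N$ be odd. Define $V:\mathbb{R}\to\mathbb{R}$ by $V(\theta)=\frac{2}{\pi}|\theta-\frac{\pi}{2}|$ for $\theta\in[0,\pi]$, extended to be $\pi$-periodic on $\mathbb{R}$, and define $F_V(\theta_1,\dots,\theta_N)=\sum_{k=1}^N\sum_{\ell\neq k}V(\theta_k-\theta_\ell)$ for $(\theta_1,\dots,\theta_N)\in\mathbb{R}^N$. Then the configuration $\Theta_N^\perp=(0,\dots,0,\frac{\pi}{2},\dots,\frac{\pi}{2})$, with $(N+1)/2$ entries equal to $0$ and $(N-1)/2$ entries equal to $\frac{\pi}{2}$, is a global minimizer of $F_V$, and the global minimum value is $F_V(\Theta_N^\perp)=(N-1)^2/2$. *)

(* Defs.v *)
From Stdlib Require Import Reals Lra Lia Arith.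
Open Scope R_scope.

(* floor of a real number: Int_part r = up r - 1 is the floor. *)
Definition rfloor (x : R) : R := IZR (Int_part x).

(* V(theta) = (2/pi) |theta - pi/2| on [0, pi], extended pi-periodically:
   reduce theta to theta' = theta - pi * floor(theta/pi) in [0, pi). *)
Definition V (theta : R) : R :=
  let t := theta - PI * rfloor (theta / PI) in
  (2 / PI) * Rabs (t - PI / 2).

Fixpoint sumn_R (n : nat) (f : nat -> R) : R :=
  match n with
  | O => 0
  | S m => sumn_R m f + f m
  end.

(* F_V(theta_1..theta_N) = sum_k sum_{l <> k} V(theta_k - theta_l);
   configurations are indexed 0..N-1 (entries beyond N-1 are irrelevant). *)
Definition F_V (N : nat) (theta : nat -> R) : R :=
  sumn_R N (fun k => sumn_R N (fun l =>
    if Nat.eqb l k then 0 else V (theta k - theta l))).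

Definition Theta_perp (N : nat) (k : nat) : R :=
  if Nat.ltb k ((N + 1) / 2) then 0 else PI / 2.

(* Main.v *)
Require Import Defs.
From Stdlib Require Import Reals Lra Lia Arith List Permutation Sorting.Sorted Sorting.Mergesort.
Open Scope R_scope.

Lemma sum_ext n f g : (forall i, (i < n)%nat -> f i = g i) -> sumn_R n f = sumn_R n g.
Proof. induction n; simpl; intros H; auto. rewrite IHn, H; auto. Qed.

Lemma sum_le n f g : (forall i, (i < n)%nat -> f i <= g i) -> sumn_R n f <= sumn_R n g.
Proof. induction n; simpl; intros H; [lra|]. assert (f n <= g n) by auto.
  assert (sumn_R n f <= sumn_R n g) by auto. lra. Qed.

Lemma sum_plus n f g : sumn_R n (fun i => f i + g i) = sumn_R n f + sumn_R n g.
Proof. induction n; simpl; [lra|]. rewrite IHn; lra. Qed.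

Lemma sum_minus n f g : sumn_R n (fun i => f i - g i) = sumn_R n f - sumn_R n g.
Proof. induction n; simpl; [lra|]. rewrite IHn; lra. Qed.

Lemma sum_scal n c f : sumn_R n (fun i => c * f i) = c * sumn_R n f.
Proof. induction n; simpl; [lra|]. rewrite IHn; lra. Qed.

Lemma sum_const n c f : (forall i, (i < n)%nat -> f i = c) -> sumn_R n f = INR n * c.
Proof. induction n; intros H; [simpl; lra|]. rewrite S_INR. cbn [sumn_R]. rewrite IHn by auto. rewrite H by lia. lra. Qed.

Lemma sum_split a b f : sumn_R (a + b) f = sumn_R a f + sumn_R b (fun i => f (a + i)%nat).
Proof. induction b; simpl. rewrite Nat.add_0_r; lra.
  rewrite Nat.add_succ_r; simpl. rewrite IHb; lra. Qed.

Lemma sum_shift n f : sumn_R (S n) f = f O + sumn_R n (fun k => f (S k)).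
Proof. replace (S n) with (1 + n)%nat by lia. rewrite sum_split. simpl. lra. Qed.

Lemma sum_swap n p f : sumn_R n (fun k => sumn_R p (fun l => f k l)) =
  sumn_R p (fun l => sumn_R n (fun k => f k l)).
Proof. induction n; simpl. induction p; simpl; lra.
  rewrite IHn, <- sum_plus. reflexivity. Qed.

Lemma sum_diag n k f : (k < n)%nat ->
  sumn_R n (fun l => if Nat.eqb l k then 0 else f l) = sumn_R n f - f k.
Proof.
  assert (forall n, (n <= k)%nat -> sumn_R n (fun l => if Nat.eqb l k then 0 else f l) = sumn_R n f).
  { induction n0; simpl; intros; auto. rewrite IHn0 by lia.
    destruct (Nat.eqb_spec n0 k); [lia|lra]. }
  induction n; intros Hk; [lia|]. simpl.
  destruct (Nat.eqb_spec n k).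
  - subst. rewrite H by lia. lra.
  - rewrite IHn by lia. lra.
Qed.

Definition lsum (g : R -> R) (L : list R) : R := fold_right (fun a acc => g a + acc) 0 L.

Lemma lsum_nth g L : lsum g L = sumn_R (length L) (fun k => g (nth k L 0)).
Proof. induction L; [reflexivity|]. cbn [length]. rewrite sum_shift. cbn [nth]. rewrite <- IHL. reflexivity. Qed.

Lemma lsum_perm g L L' : Permutation L L' -> lsum g L = lsum g L'.
Proof. induction 1; simpl; try lra. Qed.

Lemma lsum_ext g h L : (forall a, In a L -> g a = h a) -> lsum g L = lsum h L.
Proof. induction L; simpl; intros H; auto. rewrite H, IHL; auto. Qed.
Lemma Int_part_unique r z : IZR z <= r < IZR z + 1 -> Int_part r = z.
Proof.
  intros [H1 H2]. unfold Int_part.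
  assert (up r = (z + 1)%Z).
  { symmetry. apply tech_up; rewrite plus_IZR; simpl; lra. }
  rewrite H. ring.
Qed.

Lemma Int_part_bounds r : IZR (Int_part r) <= r < IZR (Int_part r) + 1.
Proof. destruct (base_Int_part r). lra. Qed.

Lemma V_char x z t : 0 <= t < PI -> x = t + IZR z * PI -> V x = 2 / PI * Rabs (t - PI / 2).
Proof.
  intros Ht Hx. unfold V, rfloor.
  assert (PI > 0) by apply PI_RGT_0.
  assert (Int_part (x / PI) = z).
  { apply Int_part_unique. subst x.
    replace ((t + IZR z * PI) / PI) with (t / PI + IZR z) by (field; lra).
    assert (0 <= t / PI < 1).
    { split. apply Rmult_le_pos; [lra| left; apply Rinv_0_lt_compat; lra].
      apply (Rmult_lt_reg_r PI); [lra|]. unfold Rdiv. rewrite Rmult_assoc, Rinv_l; lra. }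
    lra. }
  rewrite H0. f_equal. f_equal. lra.
Qed.

Definition red (x : R) : R := x - PI * rfloor (x / PI).

Lemma red_range x : 0 <= red x < PI.
Proof.
  unfold red, rfloor. assert (PI > 0) by apply PI_RGT_0.
  destruct (Int_part_bounds (x / PI)) as [H1 H2].
  set (z := IZR (Int_part (x / PI))) in *.
  assert (x = (x / PI) * PI) by (field; lra).
  split; nra.
Qed.

Lemma V_red x : V x = 2 / PI * Rabs (red x - PI / 2).
Proof. reflexivity. Qed.

Lemma V_period x z : V (x + IZR z * PI) = V x.
Proof.
  rewrite (V_red x). apply (V_char _ (Int_part (x / PI) + z)).
  apply red_range. unfold red, rfloor. rewrite plus_IZR. ring.
Qed.

Lemma V_lower x : 1 - 2 * Rabs x / PI <= V x.
Proof.
  assert (PI > 0) by apply PI_RGT_0.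
  rewrite V_red. pose proof (red_range x) as Hr.
  unfold red, rfloor in *. set (z := Int_part (x / PI)) in *.
  set (t := x - PI * IZR z) in *.
  assert (Hx : x = t + IZR z * PI) by (unfold t; ring).
  assert (K : forall a, 2 / PI * a = 2 * a / PI) by (intros; unfold Rdiv; ring).
  rewrite K. unfold Rminus at 1. 
  assert (1 = 2 * (PI/2) / PI) by (field; lra).
  assert (Rabs x >= PI / 2 - Rabs (t - PI / 2)).
  { destruct (Z.lt_trichotomy z 0) as [Hz|[Hz|Hz]].
    - assert (IZR z <= -1) by (apply IZR_le; lia).
      assert (IZR z * PI <= - PI) by nra.
      rewrite Hx. unfold Rabs; repeat destruct Rcase_abs; lra.
    - rewrite Hx, Hz. simpl. unfold Rabs; repeat destruct Rcase_abs; lra.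
    - assert (IZR z >= 1) by (apply Rle_ge, IZR_le; lia).
      assert (IZR z * PI >= PI) by nra.
      rewrite Hx. unfold Rabs; repeat destruct Rcase_abs; lra. }
  apply (Rmult_le_reg_r PI); [lra|].
  replace ((1 + - (2 * Rabs x / PI)) * PI) with (PI - 2 * Rabs x) by (field; lra).
  replace (2 * Rabs (t - PI / 2) / PI * PI) with (2 * Rabs (t - PI / 2)) by (field; lra).
  lra.
Qed.

Lemma V_0 : V 0 = 1.
Proof. assert (PI > 0) by apply PI_RGT_0. rewrite (V_char 0 0 0); [|lra|rewrite ?opp_IZR; lra].
  rewrite Rabs_left by lra. field. lra. Qed.

Lemma V_half : V (PI / 2) = 0.
Proof. assert (PI > 0) by apply PI_RGT_0. rewrite (V_char _ 0 (PI/2)); [|lra|rewrite ?opp_IZR; lra].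
  rewrite Rminus_diag, Rabs_R0. ring. Qed.

Lemma V_mhalf : V (- (PI / 2)) = 0.
Proof. assert (PI > 0) by apply PI_RGT_0. rewrite (V_char _ (-1) (PI/2)); [|lra|rewrite ?opp_IZR; lra].
  rewrite Rminus_diag, Rabs_R0. ring. Qed.
Ltac cases := repeat match goal with
 | |- context [Nat.eqb ?a ?b] => destruct (Nat.eqb_spec a b)
 | |- context [Nat.leb ?a ?b] => destruct (Nat.leb_spec a b)
 | |- context [Nat.ltb ?a ?b] => destruct (Nat.ltb_spec a b) end;
 cbv beta iota; try lia; try lra.

Definition near (m k l : nat) : bool := if Nat.leb (k - l) m then Nat.leb (l - k) m else false.
Definition sg (m k l : nat) : R := if Nat.eqb k l then 0 else
  if near m k l then (if Nat.ltb l k then 1 else -1) else (if Nat.ltb l k then -1 else 1).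
Definition far (m k l : nat) : R := if Nat.eqb k l then 0 else if near m k l then 0 else 1.

Lemma sg_anti m k l : sg m k l = - sg m l k.
Proof. unfold sg, near. cases. Qed.

Lemma row_sg m k : (k < 2 * m + 1)%nat -> sumn_R (2 * m + 1) (fun l => sg m k l) = 0.
Proof.
  intros Hk. destruct (Nat.le_gt_cases k m).
  - replace (2 * m + 1)%nat with (k + (1 + (m + (m - k))))%nat by lia.
    rewrite !sum_split.
    rewrite (sum_const k 1), (sum_const 1 0), (sum_const m (-1)), (sum_const (m - k) 1).
    + rewrite minus_INR by lia. simpl. lra.
    + intros i Hi; unfold sg, near; cases.
    + intros i Hi; unfold sg, near; cases.
    + intros i Hi; unfold sg, near; cases.
    + intros i Hi; unfold sg, near; cases.
  - replace (2 * m + 1)%nat with ((k - m) + (m + (1 + (2 * m - k))))%nat by lia.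
    rewrite !sum_split.
    rewrite (sum_const (k - m) (-1)), (sum_const m 1), (sum_const 1 0), (sum_const (2 * m - k) (-1)).
    + rewrite !minus_INR by lia. rewrite mult_INR. simpl. lra.
    + intros i Hi; unfold sg, near; cases.
    + intros i Hi; unfold sg, near; cases.
    + intros i Hi; unfold sg, near; cases.
    + intros i Hi; unfold sg, near; cases.
Qed.

Lemma row_far m k : (k < 2 * m + 1)%nat ->
  sumn_R (2 * m + 1) (fun l => far m k l) = INR (k - m) + INR (m - k).
Proof.
  intros Hk. destruct (Nat.le_gt_cases k m).
  - replace (2 * m + 1)%nat with (k + (1 + (m + (m - k))))%nat by lia.
    rewrite !sum_split.
    rewrite (sum_const k 0), (sum_const 1 0), (sum_const m 0), (sum_const (m - k) 1).
    + replace (k - m)%nat with O by lia. simpl. lra.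
    + intros i Hi; unfold far, near; cases.
    + intros i Hi; unfold far, near; cases.
    + intros i Hi; unfold far, near; cases.
    + intros i Hi; unfold far, near; cases.
  - replace (2 * m + 1)%nat with ((k - m) + (m + (1 + (2 * m - k))))%nat by lia.
    rewrite !sum_split.
    rewrite (sum_const (k - m) 1), (sum_const m 0), (sum_const 1 0), (sum_const (2 * m - k) 0).
    + replace (m - k)%nat with O by lia. simpl. lra.
    + intros i Hi; unfold far, near; cases.
    + intros i Hi; unfold far, near; cases.
    + intros i Hi; unfold far, near; cases.
    + intros i Hi; unfold far, near; cases.
Qed.

Lemma sum_absdiff m : sumn_R (2 * m + 1) (fun k => INR (k - m) + INR (m - k)) = INR m * (INR m + 1).
Proof.
  induction m.
  - simpl. lra.
  - replace (2 * S m + 1)%nat with (S (S (2 * m + 1))) by lia.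
    rewrite sum_shift. cbn [sumn_R].
    rewrite (sum_ext _ _ (fun k => INR (k - m) + INR (m - k))) by (intros; reflexivity).
    rewrite IHm. replace (S (2 * m + 1) - S m)%nat with (S m) by lia.
    replace (S m - S (2 * m + 1))%nat with O by lia.
    replace (S m - 0)%nat with (S m) by lia. replace (0 - S m)%nat with O by lia.
    rewrite S_INR. simpl. lra.
Qed.
Definition Bnd (m : nat) (y : nat -> R) (k l : nat) : R :=
  (if Nat.eqb l k then 0 else 1) - 2 / PI * (sg m k l * y k) + 2 / PI * (sg m k l * y l) - 2 * far m k l.

Lemma sum_lin4 n a b e f c1 c2 c3 :
  sumn_R n (fun i => a i - c1 * b i + c2 * e i - c3 * f i) =
  sumn_R n a - c1 * sumn_R n b + c2 * sumn_R n e - c3 * sumn_R n f.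
Proof. induction n; simpl; [ring|]. rewrite IHn. ring. Qed.

Lemma sum_scal_r n c f : sumn_R n (fun i => f i * c) = sumn_R n f * c.
Proof. induction n; simpl; [ring|]. rewrite IHn; ring. Qed.

Lemma sum_opp n f : sumn_R n (fun i => - f i) = - sumn_R n f.
Proof. induction n; simpl; [ring|]. rewrite IHn; ring. Qed.

Lemma Bnd_total m y : sumn_R (2 * m + 1) (fun k => sumn_R (2 * m + 1) (fun l => Bnd m y k l))
  = (INR (2 * m + 1) - 1) ^ 2 / 2.
Proof.
  rewrite (sum_ext _ _ (fun k => (INR (2 * m + 1) - 1) - 2 / PI * 0
      + 2 / PI * sumn_R (2 * m + 1) (fun l => sg m k l * y l) - 2 * (INR (k - m) + INR (m - k)))).
  2: { intros k Hk. unfold Bnd. rewrite sum_lin4.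
       rewrite sum_diag by exact Hk. rewrite (sum_const (2 * m + 1) 1 (fun _ => 1)) by auto.
       rewrite sum_scal_r, row_sg by exact Hk. rewrite row_far by exact Hk. ring. }
  rewrite sum_lin4. rewrite (sum_const (2 * m + 1) (INR (2 * m + 1) - 1)) by auto.
  rewrite (sum_const (2 * m + 1) 0) by auto. rewrite sum_absdiff.
  rewrite sum_swap.
  rewrite (sum_ext _ _ (fun l => 0)).
  2: { intros l Hl. rewrite sum_scal_r.
       rewrite (sum_ext _ _ (fun k => - sg m l k)) by (intros; apply sg_anti).
       rewrite sum_opp, row_sg by exact Hl. ring. }
  rewrite (sum_const _ 0) by auto.
  rewrite plus_INR, mult_INR. simpl. assert (PI <> 0) by apply PI_neq0. field; auto.
Qed.

Lemma auxA a b : b <= a -> 1 - 2 / PI * (1 * a) + 2 / PI * (1 * b) - 2 * 0 <= V (a - b).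
Proof. intros H. assert (PI > 0) by apply PI_RGT_0. eapply Rle_trans; [|apply V_lower].
  rewrite Rabs_right by lra. right. field. lra. Qed.

Lemma auxB a b : a <= b -> 1 - 2 / PI * (-1 * a) + 2 / PI * (-1 * b) - 2 * 0 <= V (a - b).
Proof. intros H. assert (PI > 0) by apply PI_RGT_0. eapply Rle_trans; [|apply V_lower].
  rewrite Rabs_left1 by lra. right. field. lra. Qed.

Lemma auxC a b : b <= a <= b + PI -> 1 - 2 / PI * (-1 * a) + 2 / PI * (-1 * b) - 2 * 1 <= V (a - b).
Proof. intros H. assert (PI > 0) by apply PI_RGT_0.
  rewrite <- (V_period (a - b) (-1)). eapply Rle_trans; [|apply V_lower].
  rewrite Rabs_left1 by lra. right. field. lra. Qed.

Lemma auxD a b : a <= b <= a + PI -> 1 - 2 / PI * (1 * a) + 2 / PI * (1 * b) - 2 * 1 <= V (a - b).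
Proof. intros H. assert (PI > 0) by apply PI_RGT_0.
  rewrite <- (V_period (a - b) 1). eapply Rle_trans; [|apply V_lower].
  rewrite Rabs_right by lra. right. field. lra. Qed.

Lemma Bnd_le m y k l : (forall i j, (i <= j < 2 * m + 1)%nat -> y i <= y j) ->
  (forall i, (i < 2 * m + 1)%nat -> 0 <= y i < PI) ->
  (k < 2 * m + 1)%nat -> (l < 2 * m + 1)%nat -> k <> l -> Bnd m y k l <= V (y k - y l).
Proof.
  intros Hs Hr Hk Hl Hkl.
  pose proof (Hr k Hk). pose proof (Hr l Hl).
  unfold Bnd, sg, far, near. cases;
  first [ apply auxA; apply Hs; lia
        | apply auxB; apply Hs; lia
        | apply auxC; split; [apply Hs; lia| lra]
        | apply auxD; split; [apply Hs; lia| lra] ].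
Qed.

Lemma Bnd_perp m k l : (k < 2 * m + 1)%nat -> (l < 2 * m + 1)%nat -> k <> l ->
  Bnd m (Theta_perp (2 * m + 1)) k l = V (Theta_perp (2 * m + 1) k - Theta_perp (2 * m + 1) l).
Proof.
  intros Hk Hl Hkl. assert (PI > 0) by apply PI_RGT_0.
  unfold Theta_perp. replace ((2 * m + 1 + 1) / 2)%nat with (S m).
  2: { replace (2 * m + 1 + 1)%nat with (S m * 2)%nat by lia. rewrite Nat.div_mul; lia. }
  unfold Bnd, sg, far, near. cases;
  rewrite ?Rminus_diag, ?Rminus_0_r, ?Rminus_0_l, ?V_0, ?V_half, ?V_mhalf; field; lra.
Qed.
Module ROrder <: Orders.TotalLeBool.
  Definition t := R.
  Definition leb (x y : R) : bool := if Rle_dec x y then true else false.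
  Theorem leb_total : forall a1 a2, leb a1 a2 = true \/ leb a2 a1 = true.
  Proof. intros a b. unfold leb. destruct (Rle_dec a b); destruct (Rle_dec b a); auto.
    exfalso; lra. Qed.
End ROrder.
Module RSort := Sort ROrder.

Lemma leb_trans : RelationClasses.Transitive (fun x y => is_true (ROrder.leb x y)).
Proof. intros a b c. unfold is_true, ROrder.leb.
  destruct (Rle_dec a b), (Rle_dec b c), (Rle_dec a c); auto; intros; exfalso; lra. Qed.

Lemma SS_nth (P : R -> R -> Prop) L d : StronglySorted P L ->
  forall i j, (i < j < length L)%nat -> P (nth i L d) (nth j L d).
Proof.
  induction 1 as [|a L HS IH HF]; simpl; intros i j Hij; [lia|].
  destruct i, j; try lia.
  - rewrite Forall_forall in HF. apply HF. apply nth_In. lia.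
  - apply IH. lia.
Qed.

Definition G (n : nat) (x : nat -> R) : R :=
  sumn_R n (fun k => sumn_R n (fun l => V (x k - x l))).

Lemma F_G n x : F_V n x = G n x - INR n.
Proof.
  unfold F_V, G.
  rewrite (sum_ext _ _ (fun k => sumn_R n (fun l => V (x k - x l)) - 1)).
  - rewrite sum_minus. rewrite (sum_const n 1 (fun _ => 1)) by auto. ring.
  - intros k Hk. rewrite (sum_diag n k (fun l => V (x k - x l))) by exact Hk.
    rewrite Rminus_diag, V_0. ring.
Qed.

Definition LL (L : list R) : R := lsum (fun a => lsum (fun b => V (a - b)) L) L.

Lemma G_list n x L : length L = n -> (forall k, (k < n)%nat -> nth k L 0 = x k) -> G n x = LL L.
Proof.
  intros Hl Hn. unfold LL, G. rewrite lsum_nth, Hl. apply sum_ext. intros k Hk.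
  rewrite lsum_nth, Hl. apply sum_ext. intros l Hl'. rewrite !Hn by auto. reflexivity.
Qed.

Lemma LL_perm L L' : Permutation L L' -> LL L = LL L'.
Proof.
  intros HP. unfold LL. rewrite (lsum_perm _ _ _ HP). apply lsum_ext.
  intros a _. apply lsum_perm; auto.
Qed.

Lemma F_lower m y : (forall i j, (i <= j < 2 * m + 1)%nat -> y i <= y j) ->
  (forall i, (i < 2 * m + 1)%nat -> 0 <= y i < PI) ->
  (INR (2 * m + 1) - 1) ^ 2 / 2 <= F_V (2 * m + 1) y.
Proof.
  intros Hs Hr. rewrite <- (Bnd_total m y). unfold F_V. apply sum_le. intros k Hk.
  apply sum_le. intros l Hl. destruct (Nat.eqb_spec l k).
  - subst. unfold Bnd, sg, far. rewrite Nat.eqb_refl. lra.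
  - apply Bnd_le; auto.
Qed.

Lemma F_perp m : F_V (2 * m + 1) (Theta_perp (2 * m + 1)) = (INR (2 * m + 1) - 1) ^ 2 / 2.
Proof.
  rewrite <- (Bnd_total m (Theta_perp (2 * m + 1))). unfold F_V. apply sum_ext. intros k Hk.
  apply sum_ext. intros l Hl. destruct (Nat.eqb_spec l k).
  - subst. unfold Bnd, sg, far. rewrite Nat.eqb_refl. ring.
  - symmetry. apply Bnd_perp; auto.
Qed.

Theorem proposition2p1 (N : nat) (hN : Nat.Odd N) :
  (forall theta : nat -> R, F_V N (Theta_perp N) <= F_V N theta) /\
  F_V N (Theta_perp N) = (INR N - 1) ^ 2 / 2.
Proof.
  destruct hN as [m ->]. split; [|apply F_perp].
  intros theta. rewrite F_perp.
  set (x := fun k => red (theta k)).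
  assert (E1 : F_V (2 * m + 1) theta = F_V (2 * m + 1) x).
  { unfold F_V. apply sum_ext. intros k _. apply sum_ext. intros l _.
    destruct (Nat.eqb l k); auto.
    replace (theta k - theta l) with
      (x k - x l + IZR (Int_part (theta k / PI) - Int_part (theta l / PI)) * PI).
    - apply V_period.
    - unfold x, red, rfloor. rewrite minus_IZR. ring. }
  set (L := map x (seq 0 (2 * m + 1))).
  set (L' := RSort.sort L).
  assert (HP : Permutation L L') by apply RSort.Permuted_sort.
  assert (HlenL : length L = (2 * m + 1)%nat) by (unfold L; rewrite length_map, length_seq; auto).
  assert (HlenL' : length L' = (2 * m + 1)%nat) by (rewrite <- (Permutation_length HP); auto).
  set (y := fun k => nth k L' 0).
  assert (E2 : F_V (2 * m + 1) x = F_V (2 * m + 1) y).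
  { rewrite !F_G. f_equal.
    rewrite (G_list _ x L HlenL).
    - rewrite (G_list _ y L' HlenL') by (intros; reflexivity). apply LL_perm; auto.
    - intros k Hk. unfold L. rewrite nth_indep with (d' := x 0%nat) by (rewrite length_map, length_seq; lia).
      rewrite map_nth, seq_nth by lia. reflexivity. }
  rewrite E1, E2. apply F_lower.
  - intros i j Hij. destruct (Nat.eq_dec i j); [subst; lra|].
    assert (HS : StronglySorted (fun a b => is_true (ROrder.leb a b)) L')
      by (apply RSort.StronglySorted_sort; apply leb_trans).
    pose proof (SS_nth _ L' 0 HS i j) as H. unfold y.
    assert (Hb : is_true (ROrder.leb (nth i L' 0) (nth j L' 0))) by (apply H; lia).
    unfold is_true, ROrder.leb in Hb. destruct Rle_dec; [auto|discriminate].
  - intros i Hi. unfold y.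
    assert (Hin : In (nth i L' 0) L) by (apply (Permutation_in _ (Permutation_sym HP)), nth_In; lia).
    unfold L in Hin. apply in_map_iff in Hin. destruct Hin as [j [<- _]].
    unfold x. apply red_range.
Qed.
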